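(* Let $A$ be a commutative ring, $\sigma$ a hereditary torsion theory on $A$-modules, and $M$ a totally $\sigma$-simple $A$-module with companion ideal $\mathfrak{h}\in\mathcal{L}(\sigma)$. Then: (1) $M\mathfrak{h}$ is not totally $\sigma$-torsion; hence $M\mathfrak{h}$ is the smallest submodule of $M$ that is not totally $\sigma$-torsion, and every submodule of $M$ that is not totally $\sigma$-torsion is itself totally $\sigma$-simple. (5) If $M'$ is a totally $\sigma$-simple $A$-module and $f:M\to M'$ is a surjective homomorphism, then $\ker f$ is totally $\sigma$-torsion.
   Context: $\mathcal{L}(\sigma)$ is the Gabriel filter of $\sigma$. A module $X$ is totally $\sigma$-torsion if $X\mathfrak{k}=0$ for some $\mathfrak{k}\in\mathcal{L}(\sigma)$. An $A$-module $M$ is totally $\sigma$-simple if $M$ is not totally $\sigma$-torsion and there exists $\mathfrak{h}\in\mathcal{L}(\sigma)$, called a companion ideal, such that $M\mathfrak{h}\subseteq H$ for every submodule $H\subseteq M$ that is not totally $\sigma$-torsion. *)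

(* Defs.v *)
From HB Require Import structures.
From mathcomp Require Import all_boot all_order all_algebra.
Set Implicit Arguments. Unset Strict Implicit. Unset Printing Implicit Defensive.
Import GRing.Theory.
Local Open Scope ring_scope.

Section Defs.
Variable A : comPzRingType.

Definition is_ideal (I : A -> Prop) : Prop :=
  I 0 /\ (forall x y, I x -> I y -> I (x + y)) /\ (forall a x, I x -> I (a * x)).

Definition colon (J : A -> Prop) (a : A) : A -> Prop := fun b => J (b * a).

(* Gabriel filter (Gabriel topology) of ideals of A, axioms T1--T4 (Stenstrom). *)
Definition gabriel_filter (L : (A -> Prop) -> Prop) : Prop :=
  (forall I, L I -> is_ideal I) /\
  L (fun _ => True) /\
  (forall I J, L I -> is_ideal J -> (forall x, I x -> J x) -> L J) /\
  (forall I J, L I -> L J -> L (fun x => I x /\ J x)) /\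
  (forall I a, L I -> L (colon I a)) /\
  (forall I J, L I -> is_ideal J -> (forall a, I a -> L (colon J a)) -> L J).

Variable M : lmodType A.

Definition is_submod (H : M -> Prop) : Prop :=
  H 0 /\ (forall x y, H x -> H y -> H (x + y)) /\ (forall a x, H x -> H (a *: x)).

Definition prodmod (H : M -> Prop) (I : A -> Prop) : M -> Prop :=
  fun x => exists n (a : 'I_n -> A) (m : 'I_n -> M),
    (forall i, I (a i)) /\ (forall i, H (m i)) /\ x = \sum_(i < n) a i *: m i.

Definition annihilated (X : M -> Prop) (k : A -> Prop) : Prop :=
  forall x a, X x -> k a -> a *: x = 0.

Definition ttorsion (L : (A -> Prop) -> Prop) (X : M -> Prop) : Prop :=
  exists k, L k /\ annihilated X k.

Definition companion (L : (A -> Prop) -> Prop) (H : M -> Prop) (h : A -> Prop) : Prop :=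
  L h /\ forall K, is_submod K -> (forall x, K x -> H x) -> ~ ttorsion L K ->
    forall x, prodmod H h x -> K x.

(* the submodule H of M, viewed as an A-module, is totally sigma-simple *)
Definition tsimple (L : (A -> Prop) -> Prop) (H : M -> Prop) : Prop :=
  is_submod H /\ ~ ttorsion L H /\ exists h, companion L H h.

End Defs.

Definition tsimple_module (A : comPzRingType) (L : (A -> Prop) -> Prop)
  (M : lmodType A) : Prop := tsimple L (fun _ : M => True).

(* Main.v *)
Require Import Defs.
From HB Require Import structures.
From mathcomp Require Import all_boot all_order all_algebra.
From Stdlib Require Classical_Prop.
Import GRing.Theory.
Local Open Scope ring_scope.

Theorem mainTheorem19 (A : comPzRingType) (L : (A -> Prop) -> Prop)
  (HL : gabriel_filter L) (M : lmodType A) (h : A -> Prop) :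
  tsimple_module L M -> companion L (fun _ : M => True) h ->
  (* (1) *)
  (~ ttorsion L (prodmod (fun _ : M => True) h)) /\
  (is_submod (prodmod (fun _ : M => True) h) /\
   forall H : M -> Prop, is_submod H -> ~ ttorsion L H ->
     forall x, prodmod (fun _ : M => True) h x -> H x) /\
  (forall H : M -> Prop, is_submod H -> ~ ttorsion L H -> tsimple L H) /\
  (* (5) *)
  (forall (M' : lmodType A) (f : {linear M -> M'}),
     tsimple_module L M' -> (forall y, exists x, f x = y) ->
     ttorsion L (fun x => f x = 0)).
Proof.
move=> [_ [Mnt _]] [Lh Hcomp].
have [Iid [LT [LS [LI [LC LG]]]]] := HL.
have [h0 [hD hM]] := Iid _ Lh.
have mk1 : forall a x, h a -> prodmod (fun _ : M => True) h (a *: x).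
  move=> a x ha; exists 1%N, (fun _ => a), (fun _ => x); split => //; split => //.
  by rewrite big_ord1.
have sub : is_submod (prodmod (fun _ : M => True) h).
  split; [|split].
  - exists 0%N, (fun _ => 0), (fun _ => 0); split => [[]//|]; split => //.
    by rewrite big_ord0.
  - move=> x y [n1 [a1 [m1 [ha1 [_ ->]]]]] [n2 [a2 [m2 [ha2 [_ ->]]]]].
    exists (n1 + n2)%N,
      (fun i => match split i with inl j => a1 j | inr j => a2 j end),
      (fun i => match split i with inl j => m1 j | inr j => m2 j end).
    split; [move=> i; by case: (split i)|split => //].
    rewrite big_split_ord /=.
    congr (_ + _); apply: eq_bigr => i _.
    + by rewrite (unsplitK (inl _ i)).
    + by rewrite (unsplitK (inr _ i)).
  - move=> b x [n [a [m [ha [_ ->]]]]].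
    exists n, (fun i => b * a i), m; split; [move=> i; exact: hM|split => //].
    rewrite scaler_sumr; apply: eq_bigr => i _; by rewrite scalerA.
have nt : ~ ttorsion L (prodmod (fun _ : M => True) h).
  move=> [k [Lk ann]]; apply: Mnt.
  pose J := fun a : A => forall x : M, a *: x = 0.
  have Jid : is_ideal J.
    split; [move=> x; by rewrite scale0r|split].
    - move=> a b Ja Jb x; by rewrite scalerDl Ja Jb addr0.
    - move=> a b Jb x; by rewrite -scalerA Jb scaler0.
  exists J; split; last by move=> x a _ Ja; apply: Ja.
  apply: (LG _ _ Lh Jid) => a ha.
  have [Jc1 [Jc2 Jc3]] := Jid.
  have cid : is_ideal (colon J a).
    split; [rewrite /colon mul0r; exact: Jc1|split].
    - move=> x y; rewrite /colon mulrDl; exact: Jc2.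
    - move=> c x; rewrite /colon -mulrA; exact: Jc3.
  apply: (LS _ _ Lk cid) => b kb x.
  by rewrite /colon -scalerA; apply: ann => //; apply: mk1.
split => //; split; first split => //.
- by move=> H sH ntH x; apply: Hcomp.
split.
- move=> H sH ntH; split => //; split => //; exists h; split => // K sK KH ntK x.
  move=> [n [a [m [ha [_ ->]]]]]; apply: (Hcomp K sK (fun _ _ => I) ntK).
  by exists n, a, m.
- move=> M' f [_ [M'nt _]] surj.
  apply: Classical_Prop.NNPP => ntK.
  have sK : is_submod (fun x => f x = 0).
    split; [exact: linear0|split].
    + by move=> x y fx fy; rewrite linearD fx fy addr0.
    + by move=> a x fx; rewrite linearZ /= fx; exact: scaler0.
  apply: M'nt; exists h; split => // y a _ ha.
  have [x <-] := surj y.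
  rewrite -linearZ; apply: (Hcomp _ sK (fun _ _ => I) ntK).
  exact: mk1.
Qed.
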